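(* Let $k\ge 2$ be an integer that is not a prime power. Then there are infinitely many integers $m$ such that $\mathcal F_k^{(m)}$ contains a vertex of level $m$ that is isolated in $\mathcal F_k^{(m)}$.
   Context: The vertex set $V$ consists of all reduced fractions $p/q$ with $p,q\in\mathbb Z$, $\gcd(p,q)=1$, together with $1/0$; here $p/q$ and $(-p)/(-q)$ denote the same vertex. For vertices define $d(p/q,a/b)=|pb-qa|$. The graph $\mathcal F_k$ has vertex set $V$, with an edge between $p/q$ and $a/b$ exactly when $d(p/q,a/b)=k$. The level of a vertex $p/q$ is $\max\{|p|,|q|\}$. For $m\in\mathbb N$, $\mathcal F_k^{(m)}$ is the subgraph of $\mathcal F_k$ induced on the vertices of level at most $m$. A prime power means $p^\ell$ with $p$ prime and $\ell>0$. *)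

(* Defs.v *)
From mathcomp Require Import all_boot all_order all_algebra.
Set Implicit Arguments. Unset Strict Implicit. Unset Printing Implicit Defensive.
Import Order.TTheory GRing.Theory Num.Theory.
Local Open Scope ring_scope.

(* A vertex p/q is represented by a pair (p, q) of coprime integers.
   The pairs (p,q) and (-p,-q) denote the same vertex; all notions below
   (d, level) are invariant under this sign change, so working with pairs
   is harmless. 1/0 is the pair (1,0) (or (-1,0)). *)
Definition is_vertex (v : int * int) : bool := gcdz v.1 v.2 == 1.

Definition level (v : int * int) : nat := maxn (absz v.1) (absz v.2).

Definition fdist (v w : int * int) : nat := absz (v.1 * w.2 - v.2 * w.1)%R.

Definition isolated_in_Fkm (k m : nat) (v : int * int) : Prop :=
  forall w : int * int, is_vertex w -> (level w <= m)%N -> fdist v w <> k.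

Definition prime_power (k : nat) : Prop :=
  exists p l : nat, prime p /\ (0 < l)%N /\ k = (p ^ l)%N.

(* Main.v *)
Require Import Defs.
From mathcomp Require Import all_boot all_order all_algebra.
From mathcomp Require Import zify ring lra.
Import GRing.Theory Num.Theory.
Local Open Scope ring_scope.

Lemma not_coprime_common (d : nat) (X Y : int) :
  (2 <= d)%N -> gcdz (d%:Z * X)%R (d%:Z * Y)%R <> 1%R.
Proof.
move=> Hd Hg.
have [u [v Huv]] := Bezoutz (d%:Z * X)%R (d%:Z * Y)%R.
rewrite Hg in Huv.
have : (d%:Z * (u * X + v * Y))%R = 1%R by rewrite -Huv; ring.
move=> H.
move: H; set t := (u * X + v * Y)%R => H.
have [Ht|Ht] : (t <= 0)%R \/ (1 <= t)%R by lia.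
- have : (d%:Z * t <= 0)%R by nia. lia.
- have : (2 <= d%:Z * t)%R by nia. lia.
Qed.

Lemma key (a b s : nat) (x y : int) :
  (2 <= a)%N -> (2 <= b)%N -> (1 <= s)%N -> coprime a b ->
  (`|x| <= a + b * s)%N -> (`|y| <= a + b * s)%N ->
  (((a + b * s)%:Z * y + b%:Z * x)%R = (a * b)%N%:Z \/
   ((a + b * s)%:Z * y + b%:Z * x)%R = (- (a * b)%N%:Z)%R) ->
  gcdz x y <> 1%R.
Proof.
move=> Ha Hb Hs Hab Hx Hy Heq.
have [u [v Huv]] := Bezoutz a%:Z b%:Z.
have Hg : gcdz a%:Z b%:Z = 1%R.
  by rewrite /gcdz /=; move/eqP: Hab => ->.
rewrite Hg in Huv.
set z := (x + s%:Z * y)%R.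
have Hz : ((a%:Z * y + b%:Z * z)%R = (a * b)%N%:Z \/ (a%:Z * y + b%:Z * z)%R = (- (a * b)%N%:Z)%R).
  rewrite /z; case: Heq => H; [left|right]; rewrite -H; rewrite !PoszD !PoszM; ring.
case: Hz => Hz.
- pose beta := (u * a%:Z - u * z + v * y)%R.
  pose alpha := (u * z + v * b%:Z - v * y)%R.
  have Hy' : y = (b%:Z * beta)%R.
    rewrite /beta; transitivity (u * (a%:Z * y) + v * b%:Z * y)%R; first by rewrite -{1}(mulr1 y) -Huv; ring.
    have E : (a%:Z * y)%R = (a%:Z * b%:Z - b%:Z * z)%R by rewrite -PoszM -Hz; ring.
    rewrite E; ring.
  have Hz' : z = (a%:Z * alpha)%R.
    rewrite /alpha; transitivity (u * a%:Z * z + v * (b%:Z * z))%R; first by rewrite -{1}(mulr1 z) -Huv; ring.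
    have E : (b%:Z * z)%R = (a%:Z * b%:Z - a%:Z * y)%R by rewrite -PoszM -Hz; ring.
    rewrite E; ring.
  have Hsum : (alpha + beta = 1)%R.
    rewrite Hy' Hz' in Hz. nia.
  have Hxz : x = (z - s%:Z * y)%R by rewrite /z; ring.
  have Hx2 : x = (a%:Z * alpha - s%:Z * b%:Z * beta)%R by rewrite Hxz Hz' Hy'; ring.
  clearbody alpha beta.
  have [A0|A0] := eqVneq alpha 0%R.
  + rewrite Hx2 Hy' A0.
    have -> : (a%:Z * 0 - s%:Z * b%:Z * beta)%R = (b%:Z * (- s%:Z * beta))%R by ring.
    exact: not_coprime_common.
  have [B0|B0] := eqVneq beta 0%R.
  + rewrite Hx2 Hy' B0.
    have -> : (a%:Z * alpha - s%:Z * b%:Z * 0)%R = (a%:Z * alpha)%R by ring.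
    have -> : (b%:Z * 0)%R = (a%:Z * 0)%R by ring.
    exact: not_coprime_common.
  + exfalso. rewrite Hx2 in Hx. nia.
- pose beta := (- u * a%:Z - u * z + v * y)%R.
  pose alpha := (u * z - v * b%:Z - v * y)%R.
  have Hy' : y = (b%:Z * beta)%R.
    rewrite /beta; transitivity (u * (a%:Z * y) + v * b%:Z * y)%R; first by rewrite -{1}(mulr1 y) -Huv; ring.
    have E : (a%:Z * y)%R = (- (a%:Z * b%:Z) - b%:Z * z)%R by rewrite -PoszM -Hz; ring.
    rewrite E; ring.
  have Hz' : z = (a%:Z * alpha)%R.
    rewrite /alpha; transitivity (u * a%:Z * z + v * (b%:Z * z))%R; first by rewrite -{1}(mulr1 z) -Huv; ring.
    have E : (b%:Z * z)%R = (- (a%:Z * b%:Z) - a%:Z * y)%R by rewrite -PoszM -Hz; ring.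
    rewrite E; ring.
  have Hsum : (alpha + beta = -1)%R.
    rewrite Hy' Hz' in Hz. nia.
  have Hxz : x = (z - s%:Z * y)%R by rewrite /z; ring.
  have Hx2 : x = (a%:Z * alpha - s%:Z * b%:Z * beta)%R by rewrite Hxz Hz' Hy'; ring.
  clearbody alpha beta.
  have [A0|A0] := eqVneq alpha 0%R.
  + rewrite Hx2 Hy' A0.
    have -> : (a%:Z * 0 - s%:Z * b%:Z * beta)%R = (b%:Z * (- s%:Z * beta))%R by ring.
    exact: not_coprime_common.
  have [B0|B0] := eqVneq beta 0%R.
  + rewrite Hx2 Hy' B0.
    have -> : (a%:Z * alpha - s%:Z * b%:Z * 0)%R = (a%:Z * alpha)%R by ring.
    have -> : (b%:Z * 0)%R = (a%:Z * 0)%R by ring.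
    exact: not_coprime_common.
  + exfalso. rewrite Hx2 in Hx. nia.
Qed.

Lemma split_k (k : nat) : (2 <= k)%N -> ~ prime_power k ->
  exists a b : nat, [/\ (2 <= a)%N, (2 <= b)%N, coprime a b & k = (a * b)%N].
Proof.
move=> Hk Hn.
have Hp : prime (pdiv k) by apply: pdiv_prime.
have Hk0 : (0 < k)%N by lia.
have [b Hcb Hkb] := pfactor_coprime Hp Hk0.
have Hl : (0 < logn (pdiv k) k)%N.
  by rewrite logn_gt0 mem_primes Hp Hk0 pdiv_dvd.
exists (pdiv k ^ logn (pdiv k) k)%N, b; split.
- have H2 := prime_gt1 Hp.
  case: (logn (pdiv k) k) Hl => // l _.
  rewrite expnS. have := expn_gt0 (pdiv k) l. rewrite (prime_gt0 Hp) /=. nia.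
- case: b Hcb Hkb => [|[|b]] //.
  + by move=> _ E; lia.
  + move=> _ E; exfalso; apply: Hn; exists (pdiv k), (logn (pdiv k) k).
    by split => //; split => //; rewrite {1}E mul1n.
- by rewrite coprimeXl.
- by rewrite {1}Hkb mulnC.
Qed.

Local Close Scope ring_scope.

Theorem proposition4p9 (k : nat) :
  (2 <= k)%N -> ~ prime_power k ->
  forall N : nat, exists m : nat, (N < m)%N /\
    exists v : int * int, is_vertex v /\ level v = m /\ isolated_in_Fkm k m v.
Proof.
move=> Hk Hn N.
have [a [b [Ha Hb Hab ->]]] := @split_k k Hk Hn.
exists (a + b * N.+1)%N; split; first by nia.
exists (Posz (a + b * N.+1)%N, (- Posz b)%R); split; [|split].
- rewrite /is_vertex /= gcdzN /gcdz /=.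
  rewrite addnC gcdnC mulnC gcdnMDl gcdnC.
  by move/eqP: Hab => ->.
- rewrite /level /=. apply/maxn_idPl. nia.
- move=> [x y] Hv Hl Hd.
  rewrite /level /= in Hl.
  rewrite /fdist /= in Hd.
  have Hx : (`|x| <= a + b * N.+1)%N by move: Hl; rewrite geq_max => /andP[].
  have Hy : (`|y| <= a + b * N.+1)%N by move: Hl; rewrite geq_max => /andP[].
  apply: (@key a b N.+1 x y Ha Hb _ Hab Hx Hy) => //.
  + lia.
  + by move/eqP: Hv.
Qed.
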